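(* Let $T\in\mathcal{L}(\mathcal{H})$ have closed range. Then $T$ is normal if and only if $T$ is both an EP operator and an SD operator.
   Context: $\mathcal{H}$ is a Hilbert space, $\mathcal{L}(\mathcal{H})$ the bounded operators on it. For $T$ with closed range, $T^\dagger$ is its Moore–Penrose inverse (unique solution of $TT^\dagger T=T$, $T^\dagger TT^\dagger=T^\dagger$, $(T^\dagger T)^*=T^\dagger T$, $(TT^\dagger)^*=TT^\dagger$). $T$ is normal if $T^*T=TT^*$. $T$ is EP if it has closed range and $R(T)=R(T^* )$ (equivalently $TT^\dagger=T^\dagger T$). $T$ is SD if it has closed range and $T^*T^\dagger=T^\dagger T^*$. *)

(* Defs.v *)
From mathcomp Require Import all_boot all_order all_algebra.
From mathcomp Require Import reals complex.
Set Implicit Arguments. Unset Strict Implicit. Unset Printing Implicit Defensive.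
Import Order.TTheory GRing.Theory Num.Theory.
Local Open Scope ring_scope.
Local Open Scope complex_scope.

Section Hilbert.
Variables (R : realType) (H : lmodType R[i]) (ip : H -> H -> R[i]).

Definition inner_product : Prop :=
  [/\ (forall (a : R[i]) (x y z : H), ip (a *: x + y) z = a * ip x z + ip y z),
      (forall x y : H, ip y x = (ip x y)^*),
      (forall x : H, 0 <= ip x x) &
      (forall x : H, ip x x = 0 -> x = 0)].

Definition hnorm (x : H) : R[i] := sqrtC (ip x x).

Definition hcvg (u : nat -> H) (l : H) : Prop :=
  forall e : R[i], 0 < e -> exists N : nat, forall n, (N <= n)%N -> hnorm (u n - l) < e.

Definition hcauchy (u : nat -> H) : Prop :=
  forall e : R[i], 0 < e -> exists N : nat,
    forall n m, (N <= n)%N -> (N <= m)%N -> hnorm (u n - u m) < e.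

Definition hilbert_space : Prop :=
  inner_product /\ (forall u, hcauchy u -> exists l, hcvg u l).

Definition bounded_op (T : H -> H) : Prop :=
  (forall (a : R[i]) (x y : H), T (a *: x + y) = a *: T x + T y) /\
  (exists M : R[i], forall x, hnorm (T x) <= M * hnorm x).

Definition is_adjoint (T S : H -> H) : Prop :=
  forall x y, ip (T x) y = ip x (S y).

Definition closed_range (T : H -> H) : Prop :=
  forall (u : nat -> H) (l : H), (forall n, exists x, u n = T x) -> hcvg u l ->
    exists x, l = T x.

Definition moore_penrose (T Td : H -> H) : Prop :=
  [/\ (forall x, T (Td (T x)) = T x),
      (forall x, Td (T (Td x)) = Td x),
      is_adjoint (fun x => Td (T x)) (fun x => Td (T x)) &
      is_adjoint (fun x => T (Td x)) (fun x => T (Td x))].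

(* In the following, Ts is the adjoint T^* and Td the Moore-Penrose inverse. *)
Definition normal_op (T Ts : H -> H) : Prop :=
  forall x, Ts (T x) = T (Ts x).

Definition EP_op (T Ts : H -> H) : Prop :=
  closed_range T /\ (forall y, (exists x, T x = y) <-> (exists x, Ts x = y)).

Definition SD_op (T Ts Td : H -> H) : Prop :=
  closed_range T /\ (forall x, Ts (Td x) = Td (Ts x)).

End Hilbert.

(* Main.v *)
Require Import Defs.
From mathcomp Require Import all_boot all_order all_algebra.
From mathcomp Require Import boolp classical_sets reals complex.
From mathcomp Require Import ring lra.
Set Implicit Arguments. Unset Strict Implicit. Unset Printing Implicit Defensive.
Import Order.TTheory GRing.Theory Num.Theory.
Local Open Scope ring_scope.
Local Open Scope complex_scope.


Section IP.
Variables (R : realType) (H : lmodType R[i]) (ip : H -> H -> R[i]).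
Hypothesis hip : inner_product ip.

Lemma ipDZl a x y z : ip (a *: x + y) z = a * ip x z + ip y z.
Proof. by case: hip. Qed.
Lemma ipJ x y : ip y x = conjc (ip x y).
Proof. by case: hip. Qed.
Lemma ip_ge0 x : 0 <= ip x x.
Proof. by case: hip. Qed.
Lemma ip_eq0 x : ip x x = 0 -> x = 0.
Proof. by case: hip => _ _ _; apply. Qed.

Lemma ip0l z : ip 0 z = 0.
Proof.
have h := ipDZl 1 0 0 z; rewrite scaler0 addr0 mul1r in h.
by apply: (addrI (ip 0 z)); rewrite addr0 -h.
Qed.
Lemma ipDl x y z : ip (x + y) z = ip x z + ip y z.
Proof. by rewrite -(scale1r x) ipDZl mul1r scale1r. Qed.
Lemma ipZl a x z : ip (a *: x) z = a * ip x z.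
Proof. by rewrite -(addr0 (a *: x)) ipDZl ip0l addr0. Qed.
Lemma ipNl x z : ip (- x) z = - ip x z.
Proof. by rewrite -scaleN1r ipZl mulN1r. Qed.
Lemma ipBl x y z : ip (x - y) z = ip x z - ip y z.
Proof. by rewrite ipDl ipNl. Qed.
Lemma ipDr x y z : ip z (x + y) = ip z x + ip z y.
Proof. by rewrite !(ipJ _ z) ipDl rmorphD. Qed.
Lemma ipZr a x z : ip z (a *: x) = conjc a * ip z x.
Proof. by rewrite !(ipJ _ z) ipZl rmorphM. Qed.
Lemma ip0r z : ip z 0 = 0.
Proof. by rewrite ipJ ip0l conjc0. Qed.
Lemma ipNr x z : ip z (- x) = - ip z x.
Proof. by rewrite !(ipJ _ z) ipNl rmorphN. Qed.
Lemma ipBr x y z : ip z (x - y) = ip z x - ip z y.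
Proof. by rewrite ipDr ipNr. Qed.

Lemma ip_ext a b : (forall x, ip x a = ip x b) -> a = b.
Proof.
move=> h; apply/eqP; rewrite -subr_eq0; apply/eqP/ip_eq0.
by rewrite ipBr h subrr.
Qed.

Definition n2 x : R := complex.Re (ip x x).

Lemma ipE x : ip x x = (n2 x)%:C.
Proof.
have := ip_ge0 x; rewrite /n2; case: (ip x x) => a b.
by rewrite lecE /= => /andP[/eqP -> _].
Qed.
Lemma n2_ge0 x : 0 <= n2 x.
Proof. by have := ip_ge0 x; rewrite ipE ler0c. Qed.
Lemma n2_eq0 x : n2 x = 0 -> x = 0.
Proof. by move=> h; apply: ip_eq0; rewrite ipE h. Qed.


Definition cn (t : R[i]) : R := complex.Re t ^+ 2 + complex.Im t ^+ 2.
Lemma mulcJ' (t : R[i]) : t * conjc t = (cn t)%:C.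
Proof. case: t => a b; rewrite /cn /=; simpc. by congr (_ +i* _); ring. Qed.
Lemma conjR (r : R) : conjc (r%:C) = r%:C.
Proof. by rewrite /conjc /= oppr0. Qed.
Lemma conjM (x y : R[i]) : conjc (x * y) = conjc x * conjc y.
Proof. case: x => a b; case: y => c d; rewrite /conjc /=; simpc; congr (_ +i* _); ring. Qed.
Lemma realCM (r s : R) : (r * s)%:C = r%:C * s%:C.
Proof. by rewrite /= ; simpc. Qed.
Lemma realCB (r s : R) : (r - s)%:C = r%:C - s%:C.
Proof. by rewrite /= ; simpc. Qed.
Lemma realCD (r s : R) : (r + s)%:C = r%:C + s%:C.
Proof. by rewrite /= ; simpc. Qed.
Lemma cn_ge0 t : 0 <= cn t.
Proof. by rewrite /cn addr_ge0 // sqr_ge0. Qed.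
Lemma cn0 : cn 0 = 0.
Proof. by rewrite /cn /= expr0n /= addr0. Qed.
Lemma cn_eq0 t : cn t = 0 -> t = 0.
Proof.
case: t => a b; rewrite /cn /= => h.
have ha : a = 0 by apply/eqP; rewrite -sqrf_eq0; apply/eqP; nra.
have hb : b = 0 by apply/eqP; rewrite -sqrf_eq0; apply/eqP; nra.
by rewrite ha hb.
Qed.

Lemma CS x y : cn (ip x y) <= n2 x * n2 y.
Proof.
set a := n2 y.
have E : (n2 (a%:C *: x - ip x y *: y))%:C = (a * (a * n2 x - cn (ip x y)))%:C.
  rewrite -ipE ipBl !ipBr !ipZl !ipZr (ipJ x y) !ipE !conjR.
  rewrite !realCM !realCB !realCM -mulcJ' -/a; ring.
have := n2_ge0 (a%:C *: x - ip x y *: y); move/complexI: E => ->.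
have [ha|ha] : a = 0 \/ 0 < a.
  by have := n2_ge0 y; rewrite -/a le_eqVlt => /orP[/eqP <-|]; [left|right].
  move=> _; have y0 : y = 0 by apply: n2_eq0.
  by rewrite y0 ip0r cn0 mulr_ge0 ?n2_ge0.
move=> h; have := cn_ge0 (ip x y); have := n2_ge0 x; nra.
Qed.
End IP.

Section Lin.
Variables (R : realType) (H : lmodType R[i]) (f : H -> H).
Hypothesis lf : forall (a : R[i]) (x y : H), f (a *: x + y) = a *: f x + f y.
Lemma lin0 : f 0 = 0.
Proof.
have h := lf 1 0 0. rewrite scaler0 in h. rewrite addr0 in h. rewrite scale1r in h.
by apply: (addrI (f 0)); rewrite addr0 -h.
Qed.
Lemma linD x y : f (x + y) = f x + f y.
Proof. by move: (lf 1 x y); rewrite !scale1r. Qed.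
Lemma linZ a x : f (a *: x) = a *: f x.
Proof. by rewrite -(addr0 (a *: x)) lf lin0 addr0. Qed.
Lemma linN x : f (- x) = - f x.
Proof. by rewrite -scaleN1r linZ scaleN1r. Qed.
Lemma linB x y : f (x - y) = f x - f y.
Proof. by rewrite linD linN. Qed.
End Lin.

Section Alg.
Variables (R : realType) (H : lmodType R[i]) (ip : H -> H -> R[i]).
Hypothesis hip : inner_product ip.
Variables (T Ts Td : H -> H).
Hypothesis lT : forall (a : R[i]) (x y : H), T (a *: x + y) = a *: T x + T y.
Hypothesis lTs : forall (a : R[i]) (x y : H), Ts (a *: x + y) = a *: Ts x + Ts y.
Hypothesis lTd : forall (a : R[i]) (x y : H), Td (a *: x + y) = a *: Td x + Td y.
Hypothesis hadj : is_adjoint ip T Ts.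
Hypothesis hmp : moore_penrose ip T Td.

Lemma ip_ext1 a b : (forall y, ip a y = ip b y) -> a = b.
Proof.
move=> h; apply: (ip_ext hip) => x.
by rewrite (ipJ hip a) (ipJ hip b) h.
Qed.

Lemma adjT x y : ip (Ts x) y = ip x (T y).
Proof. by rewrite (ipJ hip) -hadj -ipJ. Qed.

Lemma TTdT x : T (Td (T x)) = T x. Proof. by case: hmp. Qed.
Lemma TdTTd x : Td (T (Td x)) = Td x. Proof. by case: hmp. Qed.
Lemma Qsa x y : ip (Td (T x)) y = ip x (Td (T y)). Proof. by case: hmp => _ _ h _; apply: h. Qed.
Lemma Psa x y : ip (T (Td x)) y = ip x (T (Td y)). Proof. by case: hmp => _ _ _ h; apply: h. Qed.

Lemma fa y : Ts (T (Td y)) = Ts y.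
Proof.
apply: (ip_ext hip) => x.
rewrite -hadj -Psa TTdT; exact: hadj.
Qed.

Lemma fb y : Td (T (Ts y)) = Ts y.
Proof.
apply: (ip_ext hip) => x.
rewrite -Qsa -hadj TTdT; exact: hadj.
Qed.

Lemma normal_ker : normal_op T Ts -> forall x, T x = 0 <-> Ts x = 0.
Proof.
move=> hn x.
have E : ip (T x) (T x) = ip (Ts x) (Ts x).
  by rewrite (hadj x) adjT hn.
split=> h; apply: (ip_eq0 hip).
  by rewrite -E h (ip0r hip).
by rewrite E h (ip0r hip).
Qed.

Lemma EP_ker : (forall y, (exists x, T x = y) <-> (exists x, Ts x = y)) ->
  forall x, T x = 0 <-> Ts x = 0.
Proof.
move=> hr x; split=> h.
  apply: (ip_ext hip) => u; rewrite (ip0r hip).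
  have [w hw] : exists w, Ts w = T u by apply/hr; exists u.
  by rewrite -hadj -hw adjT h (ip0r hip).
apply: (ip_ext hip) => u; rewrite (ip0r hip).
have [w hw] : exists w, T w = Ts u by apply/hr; exists u.
by rewrite -adjT -hw hadj h (ip0r hip).
Qed.

Hypothesis kerEq : forall x, T x = 0 <-> Ts x = 0.

Lemma PQ x : T (Td x) = Td (T x).
Proof.
have NP : forall x, T (Td x) = 0 <-> T x = 0.
  move=> z; rewrite (kerEq z); split => h.
    by rewrite -fa h (lin0 lTs).
  by apply: (ip_eq0 hip); rewrite (hadj (Td z)) fa h (ip0r hip).

have NQ : forall x, Td (T x) = 0 <-> T x = 0.
  move=> w; split => h; last by rewrite h (lin0 lTd).
  by rewrite -TTdT h (lin0 lT).
have QP : forall x, Td (T x) = Td (T (T (Td x))).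
  move=> z; apply/eqP; rewrite -subr_eq0 -(linB lTd) -(linB lT); apply/eqP.
  apply/NQ/NP; by rewrite (linB lTd) TdTTd subrr (lin0 lT).
have PQ' : forall x, T (Td x) = T (Td (Td (T x))).
  move=> z; apply/eqP; rewrite -subr_eq0 -(linB lT) -(linB lTd); apply/eqP.
  apply/NP; by rewrite (linB lT) TTdT subrr.
apply: ip_ext1 => y.
by rewrite PQ' Psa Qsa -QP -Qsa.
Qed.

Lemma normal_of_SD : (forall x, Ts (Td x) = Td (Ts x)) -> normal_op T Ts.
Proof.
move=> hsd x.
by symmetry; rewrite -fa PQ hsd PQ fb.
Qed.

Lemma SD_of_normal : normal_op T Ts -> forall x, Ts (Td x) = Td (Ts x).
Proof.
move=> hn x.
have -> : x = T (Td x) + (x - T (Td x)) by rewrite addrC subrK.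
set w := x - T (Td x).
have Pw : T (Td w) = 0 by rewrite /w (linB lTd) (linB lT) TTdT subrr.
have Tdw : Td w = 0 by rewrite -TdTTd Pw (lin0 lTd).
have Tsw : Ts w = 0 by rewrite -fa Pw (lin0 lTs).
rewrite (linD lTd) (linD lTs) (linD lTs) (linD lTd) Tdw Tsw (lin0 lTs) (lin0 lTd) !addr0.
by rewrite -PQ fa hn fb.
Qed.

Lemma range_Ts_sub x : exists w, T w = Ts x.
Proof. by exists (Td (Ts x)); rewrite PQ fb. Qed.
End Alg.

Section Ana.
Variables (R : realType) (H : lmodType R[i]) (ip : H -> H -> R[i]).
Hypothesis hip : inner_product ip.
Local Notation n2 := (n2 ip).

Lemma cpos (e : R[i]) : 0 < e -> e = (complex.Re e)%:C /\ 0 < complex.Re e.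
Proof. by case: e => a b; rewrite ltcE /= => /andP[/eqP -> ->]. Qed.

Lemma hnorm_lt z (e : R[i]) : 0 < e -> (hnorm ip z < e) = (n2 z < (complex.Re e)^+2).
Proof.
move=> /cpos[-> he]; rewrite /hnorm (ipE hip) /=.
have -> : (complex.Re e)%:C = sqrtC (((complex.Re e)^+2)%:C).
  rewrite expr2 realCM -expr2 sqrCK // ler0c; exact: ltW.
rewrite ltr_sqrtC ?nnegrE ?ler0c ?n2_ge0 ?sqr_ge0 //.
by rewrite ltcR.
Qed.

Lemma hcvgR u l : hcvg ip u l -> forall eps : R, 0 < eps ->
  exists N, forall n, (N <= n)%N -> n2 (u n - l) < eps.
Proof.
move=> hu eps he.
set eta := Num.min 1 eps.
have et0 : 0 < eta by rewrite lt_min ltr01 he.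
have := hu eta%:C; rewrite ltcR => /(_ et0) [N hN].
exists N => n /hN; rewrite hnorm_lt ?ltcR //= => h.
apply: (lt_le_trans h).
have : eta <= 1 by rewrite ge_min lexx.
have : eta <= eps by rewrite ge_min lexx orbT.
move=> h1 h2; nra.
Qed.

Lemma cauchyR u : (forall eps : R, 0 < eps ->
  exists N, forall n m, (N <= n)%N -> (N <= m)%N -> n2 (u n - u m) < eps) ->
  hcauchy ip u.
Proof.
move=> hu e he.
have [_ hr] := cpos he.
have [N hN] := hu _ (exprn_gt0 2 hr).
by exists N => n m hn hm; rewrite hnorm_lt //; apply: hN.
Qed.

Lemma n2Z c x : n2 (c *: x) = cn c * n2 x.
Proof.
apply: complexI; rewrite -ipE // (ipZl hip) (ipZr hip) (ipE hip) realCM -mulcJ'.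
ring.
Qed.

Lemma n2N x : n2 (- x) = n2 x.
Proof. by rewrite -scaleN1r n2Z /cn /= oppr0 sqrrN expr1n expr2 mulr0 addr0 mul1r. Qed.

Lemma paral x y : n2 (x + y) + n2 (x - y) = 2 * n2 x + 2 * n2 y.
Proof.
apply: complexI; rewrite !realCD !realCM -!ipE // !(ipDl hip, ipBl hip, ipDr hip, ipBr hip, ipNl hip, ipNr hip).
have -> : (2 : R)%:C = 2 by rewrite (rmorph_nat (real_complex R)).
ring.
Qed.


Lemma cnD (a b : R[i]) : cn (a + b) <= 2 * cn a + 2 * cn b.
Proof. case: a => a1 a2; case: b => b1 b2; rewrite /cn /=; have := sqr_ge0 (a1 - b1); have := sqr_ge0 (a2 - b2); nra. Qed.

Lemma small (eps : R) : 0 < eps -> exists N, forall n, (N <= n)%N -> (n.+1%:R)^-1 < eps.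
Proof.
move=> he; exists (Num.bound (eps^-1)) => n hn.
have hi : 0 < eps^-1 by rewrite invr_gt0.
have h1 := archi_boundP (ltW hi).
have h2 : ((Num.bound eps^-1)%:R : R) <= n%:R by rewrite ler_nat.
have h3 : (n%:R : R) < n.+1%:R by rewrite ltr_nat.
rewrite -(invrK eps) ltf_pV2 ?posrE ?invr_gt0 ?ltr0Sn //.
by apply: (lt_le_trans h1); apply: (le_trans h2); apply: ltW.
Qed.

Lemma var r m (d dl : R) : 0 < n2 m -> (forall s, d <= n2 (r - s *: m)) ->
  n2 r < d + dl -> cn (ip r m) <= n2 m * dl.
Proof.
move=> hm hs hr.
set c := n2 m; set k := c^-1.
have kc : k * c = 1 by rewrite mulVf // gt_eqF.
have E : n2 (r - (ip r m * k%:C) *: m) = n2 r - k * cn (ip r m).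
  apply: complexI; rewrite -ipE // !(ipBl hip, ipBr hip, ipZl hip, ipZr hip).
  rewrite (ipJ hip r m) (ipE hip m) (ipE hip r) conjM conjR realCB realCM -mulcJ' -/c.
  have kc' : k%:C * c%:C = 1 by rewrite -realCM kc.
  have -> : ip r m * k%:C * (conjc (ip r m) * k%:C * c%:C) =
     ip r m * k%:C * conjc (ip r m) + ip r m * k%:C * conjc (ip r m) * (k%:C * c%:C - 1) by ring.
  rewrite kc' subrr mulr0 addr0; ring.
have := hs (ip r m * k%:C); rewrite E => h.
have hk : 0 < k by rewrite invr_gt0.
have hcn := cn_ge0 (ip r m).
have : k * cn (ip r m) < dl by lra.
move=> h'; have -> : cn (ip r m) = c * (k * cn (ip r m)) by rewrite mulrA (mulrC c) kc mul1r.
by apply: ler_wpM2l; [exact: ltW | exact: ltW].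
Qed.

Lemma arith (p c dn e2 q a1 a2 : R) : 0 < c -> p <= 2 * a1 + 2 * a2 ->
  a1 <= c * dn -> a2 <= e2 * c -> dn < q -> e2 < q -> q * (4 * c) = p ->
  0 < dn -> 0 <= e2 -> 0 < p -> False.
Proof. move=> *; nra. Qed.

Section Core.
Variables (A B : H -> H).
Hypothesis lA : forall (a : R[i]) (x y : H), A (a *: x + y) = a *: A x + A y.
Hypothesis lB : forall (a : R[i]) (x y : H), B (a *: x + y) = a *: B x + B y.
Hypothesis hiso : forall a, n2 (A a) = n2 (B a).
Hypothesis hcr : closed_range ip B.
Hypothesis hc : forall u, hcauchy ip u -> exists l, hcvg ip u l.

Lemma core v : exists z, forall u, ip (v - A z) (A u) = 0.
Proof.
pose E := range (fun x => n2 (v - A x)).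
have Ei : has_inf E.
  split; first by exists (n2 (v - A 0)); exists 0.
  by exists 0 => _ [x _ <-]; exact: n2_ge0.
set d := inf E.
have dlb : forall x, d <= n2 (v - A x) by move=> x; apply: ge_inf (Ei.2) _ _; exists x.
have dad : forall n : nat, exists x, n2 (v - A x) < d + (n.+1%:R)^-1.
  move=> n; have hn : 0 < (n.+1%:R : R)^-1 by rewrite invr_gt0 ltr0Sn.
  have [_ [x _ <-] hx] := inf_adherent hn Ei.
  by exists x.
have [xs hxs] := choice dad.
pose dl (n : nat) : R := (n.+1%:R)^-1.
have dl0 : forall n, 0 < dl n by move=> n; rewrite invr_gt0 ltr0Sn.
have cau : forall n k, n2 (A (xs n) - A (xs k)) <= 2 * dl n + 2 * dl k.
  move=> n k.
  set a := v - A (xs k); set b := v - A (xs n).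
  have hab : a - b = A (xs n) - A (xs k) by rewrite /a /b opprB addrC addrA subrK.
  pose c : R[i] := (2^-1 : R)%:C.
  have c2 : c * 2 = 1.
    rewrite /c -(rmorph_nat (real_complex R)) -realCM mulVf //.
    by rewrite pnatr_eq0.
  have hmid : c *: (a + b) = v - A (c *: (xs k + xs n)).
    rewrite (linZ lA) (linD lA) /a /b.
    have -> : v - A (xs k) + (v - A (xs n)) = 2 *: v - (A (xs k) + A (xs n)).
      by rewrite scaler_nat mulr2n opprD !addrA; congr (_ + _); rewrite -!addrA; congr (_ + _); rewrite addrC.
    by rewrite scalerBr scalerA c2 scale1r.
  have hn2 : n2 (a + b) = 4 * n2 (v - A (c *: (xs k + xs n))).
    rewrite -hmid n2Z /c /cn /= expr0n /= addr0 mulrA exprVn.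
    by rewrite -natrX mulfV ?mul1r // pnatr_eq0.
  have hp := paral a b.
  have := dlb (c *: (xs k + xs n)); have := hxs n; have := hxs k.
  rewrite -/a -/b hab in hp *; rewrite -/(dl n) -/(dl k); lra.
pose u n := B (xs n).
have ucau : hcauchy ip u.
  apply: cauchyR => eps he.
  have [N hN] := small (divr_gt0 he (ltr0n R 4)).
  exists N => n k hn hk; rewrite /u -(linB lB) -hiso (linB lA).
  have := cau n k; have := hN _ hn; have := hN _ hk; rewrite -/(dl n) -/(dl k); lra.
have [l hl] := hc ucau.
have [z hz] := hcr (fun n => ex_intro _ (xs n) erefl) hl.
have conv : forall eps, 0 < eps -> exists N, forall n, (N <= n)%N -> n2 (A (xs n) - A z) < eps.
  move=> eps he; have [N hN] := hcvgR hl he; exists N => n hn.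
  by rewrite -(linB lA) hiso (linB lB) -hz; exact: hN.
exists z => w.
set m := A w.
have [c0|cpos'] : n2 m = 0 \/ 0 < n2 m.
  by have := n2_ge0 hip m; rewrite le_eqVlt => /orP[/eqP <-|]; [left|right].
  by rewrite (n2_eq0 hip c0) (ip0r hip).
apply: (cn_eq0); apply/eqP; rewrite eq_le cn_ge0 andbT; apply/negP => /negP.
rewrite -ltNge => pp.
set p := cn (ip (v - A z) m) in pp.
set q := p / (4 * n2 m).
have q0 : 0 < q by rewrite divr_gt0 // mulr_gt0 // ltr0n.
have [N1 h1] := small q0.
have [N2 h2] := conv _ q0.
pose n := maxn N1 N2.
have hv : cn (ip (v - A (xs n)) m) <= n2 m * dl n.
  apply: (@var _ _ d) => //.
  move=> s; rewrite -/m.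
  have -> : v - A (xs n) - s *: m = v - A (xs n + s *: w).
    by rewrite (linD lA) (linZ lA) opprD addrA.
  exact: dlb.
have hw : cn (ip (A (xs n) - A z) m) <= n2 (A (xs n) - A z) * n2 m by exact: CS.
have hsplit : ip (v - A z) m = ip (v - A (xs n)) m + ip (A (xs n) - A z) m.
  by rewrite -(ipDl hip) addrA subrK.
have hd := cnD (ip (v - A (xs n)) m) (ip (A (xs n) - A z) m).
rewrite -hsplit -/p in hd.
have e1 : dl n < q by apply: h1; rewrite leq_maxl.
have e2 : n2 (A (xs n) - A z) < q by apply: h2; rewrite leq_maxr.
have qe : q * (4 * n2 m) = p by rewrite /q mulfVK // mulf_neq0 // ?pnatr_eq0 // gt_eqF.
exact: (arith cpos' hd hv hw e1 e2 qe (dl0 n) (n2_ge0 hip _) pp).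
Qed.
End Core.
End Ana.
Local Close Scope complex_scope.
Theorem mainTheorem4 (R : realType) (H : lmodType R[i]) (ip : H -> H -> R[i])
  (hH : hilbert_space ip) (T Ts Td : H -> H)
  (hT : bounded_op ip T) (hTs : bounded_op ip Ts) (hadj : is_adjoint ip T Ts)
  (hcr : closed_range ip T)
  (hTd : bounded_op ip Td) (hmp : moore_penrose ip T Td) :
  normal_op T Ts <-> EP_op ip T Ts /\ SD_op ip T Ts Td.
Proof.
have [hip hc] := hH.
have lT := hT.1; have lTs := hTs.1; have lTd := hTd.1.
split.
  move=> hn.
  have kE := normal_ker hip hadj hn.
  split; last by split=> //; exact: (SD_of_normal hip lT lTs lTd hadj hmp kE hn).
  split=> // y; split; last first.
    by move=> [x <-]; exact: (range_Ts_sub hip lT lTs lTd hadj hmp kE x).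
  move=> [x <-].
  have hiso : forall a, n2 ip (Ts a) = n2 ip (T a).
    move=> a; apply: complexI; rewrite -!(ipE hip) (hadj a) (adjT hip hadj) hn.
    by [].
  have [z hz] := core hip lTs lT hiso hcr hc (T x).
  exists z.
  have [w hw] := range_Ts_sub hip lT lTs lTd hadj hmp kE z.
  set r := T x - Ts z.
  have Tr : T r = 0.
    apply: (ip_ext1 hip) => u; rewrite (ip0l hip) (hadj r).
    exact: hz.
  have rT : r = T (x - w) by rewrite /r (linB lT) hw.
  have r0 : r = 0.
    by rewrite rT -(TTdT hmp) (PQ hip lT lTs lTd hadj hmp kE) -rT Tr (lin0 lTd).
  by apply/eqP; rewrite eq_sym -subr_eq0; apply/eqP.
move=> [[_ hr] [_ hsd]].
have kE := EP_ker hip hadj hr.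
exact: (normal_of_SD hip lT lTs lTd hadj hmp kE hsd).
Qed.
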